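(* Let $\mathcal{S}$ be a set of LU-theories in a common predicate language $\Sigma$, any two of which are language similar. Then the relation $\sqsubseteq^L$ is a partial order on $\mathcal{S}$.
   Context: Theories are complete theories in predicate (relational) languages. A predicate symbol $R$ is non-empty for $T$ if $T\vdash\exists\bar x R(\bar x)$. A theory $T$ in a predicate language $\Sigma$ is language uniform (an LU-theory) if for each arity $n$, every permutation of the set of $n$-ary symbols that are non-empty for $T$ preserves $T$ (i.e., replacing each such symbol by its image maps $T$ onto $T$). Theories $T_0,T_1$ in languages $\Sigma_0,\Sigma_1$ are language similar if $T_0$ can be obtained from $T_1$ by a bijective (arity-preserving) replacement of the symbols of $\Sigma_1$ by the symbols of $\Sigma_0$. For language similar theories $T_1,T_2$ of the same language $\Sigma$, $T_1\sqsubseteq^L T_2$ means: for every $R\in\Sigma$, if $T_1\vdash\exists\bar x R(\bar x)$ then $T_2\vdash\exists\bar x R(\bar x)$. *)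

(* Defs.v *)
From mathcomp Require Import all_boot.
Set Implicit Arguments.
Unset Strict Implicit.
Unset Printing Implicit Defensive.

Section FOL.
Variable sym : Type.
Variable ar : sym -> nat.

(* Formulas of the relational language, variables as de Bruijn indices. *)
Inductive form : Type :=
| Fal : form
| Eq : nat -> nat -> form
| Rel : sym -> seq nat -> form
| Imp : form -> form -> form
| All : form -> form.

Definition Neg (f : form) : form := Imp f Fal.
Definition Ex (f : form) : form := Neg (All (Neg f)).

Fixpoint wf (f : form) : Prop :=
  match f with
  | Fal => True
  | Eq _ _ => True
  | Rel R a => size a = ar R
  | Imp f g => wf f /\ wf g
  | All f => wf f
  end.

Fixpoint closed_at (k : nat) (f : form) : bool :=
  match f with
  | Fal => true
  | Eq i j => (i < k) && (j < k)
  | Rel _ a => all (fun i => i < k) a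
  | Imp f g => closed_at k f && closed_at k g
  | All f => closed_at k.+1 f
  end.

Definition sentence (f : form) : Prop := wf f /\ closed_at 0 f.

Record structure : Type := Structure {
  dom : Type;
  dom_inh : dom;
  rel : sym -> seq dom -> Prop }.

Definition scons (D : Type) (d : D) (rho : nat -> D) (n : nat) : D :=
  match n with 0 => d | k.+1 => rho k end.

Fixpoint sat (M : structure) (rho : nat -> dom M) (f : form) : Prop :=
  match f with
  | Fal => False
  | Eq i j => rho i = rho j
  | Rel R a => @rel M R (map rho a)
  | Imp f g => sat rho f -> sat rho g
  | All f => forall d : dom M, sat (scons d rho) f
  end.

Definition theory_set := form -> Prop.

(* T |- f  (semantic consequence; equivalent to derivability by Goedel's
   completeness theorem) *)
Definition entails (T : theory_set) (f : form) : Prop :=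
  forall (M : structure) (rho : nat -> dom M),
    (forall g, T g -> sat rho g) -> sat rho f.

Definition is_theory (T : theory_set) : Prop :=
  (forall f, T f -> sentence f) /\
  (forall f, sentence f -> entails T f -> T f).

Definition complete_theory (T : theory_set) : Prop :=
  [/\ is_theory T, ~ T Fal & forall f, sentence f -> T f \/ T (Neg f)].

Definition theory_eq (T1 T2 : theory_set) : Prop := forall f, T1 f <-> T2 f.

Definition exs (n : nat) (f : form) : form := iter n Ex f.
Definition ex_rel (R : sym) : form := exs (ar R) (Rel R (iota 0 (ar R))).

Definition nonempty_sym (T : theory_set) (R : sym) : Prop := entails T (ex_rel R).

Fixpoint rename (s : sym -> sym) (f : form) : form :=
  match f with
  | Fal => Fal
  | Eq i j => Eq i j
  | Rel R a => Rel (s R) a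
  | Imp f g => Imp (rename s f) (rename s g)
  | All f => All (rename s f)
  end.

Definition rename_theory (s : sym -> sym) (T : theory_set) : theory_set :=
  fun g => exists f, T f /\ g = rename s f.

Definition preserves (s : sym -> sym) (T : theory_set) : Prop :=
  theory_eq (rename_theory s T) T.

Definition arity_bijection (s : sym -> sym) : Prop :=
  bijective s /\ forall R, ar (s R) = ar R.

(* LU-theory: for each arity n, every permutation of the set of n-ary
   symbols non-empty for T (extended by the identity to the other symbols)
   preserves T. *)
Definition LU_theory (T : theory_set) : Prop :=
  forall (n : nat) (p : sym -> sym),
    bijective p ->
    (forall R, ar R = n /\ nonempty_sym T R ->
               ar (p R) = n /\ nonempty_sym T (p R)) ->
    (forall R, ~ (ar R = n /\ nonempty_sym T R) -> p R = R) ->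
    preserves p T.

Definition language_similar (T0 T1 : theory_set) : Prop :=
  exists s, arity_bijection s /\ theory_eq (rename_theory s T1) T0.

Definition sqsubL (T1 T2 : theory_set) : Prop :=
  forall R, nonempty_sym T1 R -> nonempty_sym T2 R.

End FOL.

(* Main.v *)
Require Import Defs.
From Stdlib Require Import ClassicalEpsilon Classical FunctionalExtensionality.
From mathcomp Require Import all_boot.

Section Aux.
Variable sym : Type.
Variable ar : sym -> nat.

Lemma rename_ext (f1 f2 : sym -> sym) g :
  (forall R, f1 R = f2 R) -> rename f1 g = rename f2 g.
Proof. move=> H; elim: g => //= [R a|f IHf h IHh|f IHf]; by rewrite ?H ?IHf ?IHh. Qed.

Lemma rename_comp (f1 f2 : sym -> sym) g :
  rename f1 (rename f2 g) = rename (fun R => f1 (f2 R)) g.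
Proof. elim: g => //= [f IHf h IHh|f IHf]; by rewrite ?IHf ?IHh. Qed.

Lemma rename_id g : rename (fun R : sym => R) g = g.
Proof. elim: g => //= [f IHf h IHh|f IHf]; by rewrite ?IHf ?IHh. Qed.

Lemma rename_wf (f : sym -> sym) g :
  (forall R, ar (f R) = ar R) -> wf ar g -> wf ar (rename f g).
Proof.
move=> H; elim: g => //=.
- by move=> R a; rewrite H.
- move=> f1 IH1 h IH2 [] *; split; auto.
Qed.

Lemma rename_closed (f : sym -> sym) g k :
  closed_at k (rename f g) = closed_at k g.
Proof. elim: g k => //= f1 IH1 h IH2 k; by rewrite IH1 IH2. Qed.

Lemma rename_sentence (f : sym -> sym) g :
  (forall R, ar (f R) = ar R) -> sentence ar g -> sentence ar (rename f g).
Proof. move=> H [H1 H2]; split; [exact: rename_wf|by rewrite rename_closed]. Qed.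

Lemma rename_exs (f : sym -> sym) n g :
  rename f (exs n g) = exs n (rename f g).
Proof. elim: n => //= n IH; by rewrite IH. Qed.

Lemma closed_exs n (g : form sym) k : closed_at k (exs n g) = closed_at (n + k) g.
Proof.
elim: n k => //= n IH k. rewrite /Ex /Neg /= IH addnS !andbT //.
Qed.


Lemma wf_exs n g : wf ar g -> wf ar (exs n g).
Proof. elim: n => //= n IH H; split => //; split => //; exact: IH. Qed.

Lemma sentence_ex_rel R : sentence ar (ex_rel ar R).
Proof.
split.
- apply: wf_exs => /=; by rewrite size_iota.
- rewrite /ex_rel closed_exs addn0 /=. apply/allP => i; by rewrite mem_iota.
Qed.

Lemma theory_entails T f : is_theory ar T -> sentence ar f ->
  (entails T f <-> T f).
Proof.
move=> [_ H2] Hs; split; first exact: H2.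
move=> Tf M rho H; exact: H.
Qed.

Fixpoint syms_ok (P : sym -> Prop) (g : form sym) : Prop :=
  match g with
  | Rel R _ => P R
  | Imp f h => syms_ok P f /\ syms_ok P h
  | All f => syms_ok P f
  | _ => True
  end.

Lemma syms_ok_mono (P Q : sym -> Prop) g :
  (forall R, P R -> Q R) -> syms_ok P g -> syms_ok Q g.
Proof.
move=> H; elim: g => //=.
- by move=> R a; apply: H.
- move=> f1 IH1 h IH2 [] *; split; auto.
Qed.

Lemma syms_ok_bound g : exists k, syms_ok (fun R => ar R < k) g.
Proof.
elim: g => /=; try by exists 0.
- move=> R _; exists (ar R).+1; exact: ltnSn.
- move=> f [k1 H1] h [k2 H2]; exists (maxn k1 k2); split.
  + apply: syms_ok_mono H1 => R H; apply: (leq_trans H); exact: leq_maxl.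
  + apply: syms_ok_mono H2 => R H; apply: (leq_trans H); exact: leq_maxr.
- move=> f [k H]; by exists k.
Qed.

Lemma sat_exs (M : structure sym) n (rho : nat -> dom M) g (sigma : nat -> dom M) :
  (forall i, n <= i -> sigma i = rho (i - n)) -> sat sigma g -> sat rho (exs n g).
Proof.
elim: n rho sigma => [|n IH] rho sigma Hs Hg /=.
  have -> : rho = sigma by apply: functional_extensionality => i; rewrite Hs // subn0.
  done.
move=> Hall; apply: (Hall (sigma n)); apply: (IH _ sigma) => // i Hi.
case: (ltngtP n i) => Hni; last by rewrite Hni subnn.
- rewrite Hs // subnS. have : 0 < i - n by rewrite subn_gt0.
  case E: (i - n) => [|k] //= _. 
- by rewrite leqNgt Hni in Hi.
Qed.

Lemma sat_ex_rel (M : structure sym) (rho : nat -> dom M) R (l : seq (dom M)) :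
  size l = ar R -> @Defs.rel _ M R l -> sat rho (ex_rel ar R).
Proof.
move=> Hl Hr.
pose sigma i := if i < ar R then nth (dom_inh M) l i else rho (i - ar R).
apply: (@sat_exs M (ar R) rho _ sigma).
  by move=> i Hi; rewrite /sigma ltnNge Hi.
rewrite /=.
suff -> : map sigma (iota 0 (ar R)) = l by [].
rewrite -[RHS](mkseq_nth (dom_inh M) l) /mkseq Hl.
apply/eq_in_map => i; rewrite mem_iota add0n => /andP [_ Hi]; by rewrite /sigma Hi.
Qed.

Lemma sat_transfer (M : structure sym) (f1 f2 : sym -> sym) g :
  (forall R, ar (f1 R) = ar R) -> (forall R, ar (f2 R) = ar R) ->
  wf ar g ->
  syms_ok (fun R => f1 R = f2 R \/
     (forall l, size l = ar R -> ~ @Defs.rel _ M (f1 R) l /\ ~ @Defs.rel _ M (f2 R) l)) g ->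
  forall rho : nat -> dom M, sat rho (rename f1 g) <-> sat rho (rename f2 g).
Proof.
move=> A1 A2; elim: g => //=.
- move=> R a Hw [E|E] rho; first by rewrite E.
  have Hs : size (map rho a) = ar R by rewrite size_map.
  case: (E _ Hs) => N1 N2; split => H; [exfalso; exact: N1|exfalso; exact: N2].
- move=> f IH1 h IH2 [W1 W2] [S1 S2] rho.
  move: (IH1 W1 S1 rho) (IH2 W2 S2 rho); tauto.
- move=> f IH W S rho; split => H d; apply/(IH W S); exact: H.
Qed.

Lemma rename_inv (s si : sym -> sym) g : cancel s si ->
  rename si (rename s g) = g.
Proof.
move=> K; rewrite rename_comp -{2}(rename_id g); apply: rename_ext => R; exact: K.
Qed.

End Aux.

Theorem proposition4p4 (sym : Type) (ar : sym -> nat)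
    (S : theory_set sym -> Prop) :
  (forall T, S T -> complete_theory ar T /\ LU_theory ar T) ->
  (forall T0 T1, S T0 -> S T1 -> language_similar ar T0 T1) ->
  [/\ (forall T, S T -> sqsubL ar T T),
      (forall T1 T2 T3, S T1 -> S T2 -> S T3 ->
         sqsubL ar T1 T2 -> sqsubL ar T2 T3 -> sqsubL ar T1 T3)
    & (forall T1 T2, S T1 -> S T2 ->
         sqsubL ar T1 T2 -> sqsubL ar T2 T1 -> theory_eq T1 T2)].
Proof.
move=> HS Hsim; split.
- by move=> T _ R.
- move=> T1 T2 T3 _ _ _ H12 H23 R H; exact: H23 (H12 R H).
move=> T1 T2 S1 S2 H12 H21.
have [[Th1 C1 Cp1] _] := HS T1 S1.
have [[Th2 C2 Cp2] LU2] := HS T2 S2.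
have [s [[[si K1 K2] As] Es]] := Hsim T1 T2 S1 S2.
pose N R := nonempty_sym ar T2 R.
have T1E : forall f, T1 (rename s f) <-> T2 f.
  move=> f; split => H.
  - have /Es [g [Tg E]] := H.
    by rewrite -(rename_inv _ _ _ f K1) E (rename_inv _ _ _ g K1).
  - apply/Es; by exists f.
have NS : forall R, N (s R) <-> N R.
  move=> R; rewrite /N; split => H.
  - have H1 := H21 _ H.
    rewrite /nonempty_sym in H1 *.
    apply/(theory_entails _ _ _ _ Th2 (sentence_ex_rel _ ar R)).
    apply/T1E. rewrite rename_exs /= -(As R).
    apply/(theory_entails _ _ _ _ Th1 (sentence_ex_rel _ ar (s R))); exact: H1.
  - apply: H12. rewrite /nonempty_sym.
    apply/(theory_entails _ _ _ _ Th1 (sentence_ex_rel _ ar (s R))).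
    rewrite /ex_rel (As R) -[Rel _ _]/(rename s (Rel R (iota 0 (ar R)))) -rename_exs.
    apply/T1E; apply/(theory_entails _ _ _ _ Th2 (sentence_ex_rel _ ar R)); exact: H.
pose p k R := if excluded_middle_informative (ar R = k /\ N R) then s R else R.
have Pp : forall k g, T2 g -> T2 (rename (p k) g).
  move=> k g Hg.
  pose pi R := if excluded_middle_informative (ar R = k /\ N R) then si R else R.
  have Hpres : preserves (p k) T2.
    apply: (LU2 k).
    + exists pi => R; rewrite /p /pi.
      * case: (excluded_middle_informative (ar R = k /\ N R)) => [[H1 H2]|H] /=.
          case: (excluded_middle_informative (ar (s R) = k /\ N (s R))) => [_|[]] /=; first exact: K1.
          by rewrite As; split => //; apply/NS.
        case: (excluded_middle_informative (ar R = k /\ N R)) => //.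
      * case: (excluded_middle_informative (ar R = k /\ N R)) => [[H1 H2]|H] /=.
          case: (excluded_middle_informative (ar (si R) = k /\ N (si R))) => [_|[]] /=; first exact: K2.
          rewrite -As K2; split => //; apply/NS; by rewrite K2.
        case: (excluded_middle_informative (ar R = k /\ N R)) => //.
    + move=> R [H1 H2]; rewrite /p.
      case: (excluded_middle_informative (ar R = k /\ N R)) => [_|c] /=; last by exfalso; apply: c; split.
      by rewrite As; split => //; apply/NS.
    + move=> R H; rewrite /p; case: (excluded_middle_informative (ar R = k /\ N R)) => [c|//].
      by exfalso; apply: H.
  apply/Hpres; by exists g.
have Ap : forall k R, ar (p k R) = ar R.
  move=> k R; rewrite /p; case: (excluded_middle_informative (ar R = k /\ N R)) => //= _; exact: As.
pose q := fix q (k : nat) : sym -> sym := match k with 0 => (fun R => R) | k'.+1 => (fun R => p k' (q k' R)) end.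
have Aq : forall k R, ar (q k R) = ar R.
  by elim=> //= k IH R; rewrite Ap IH.
have Qspec : forall k R, (ar R < k /\ N R -> q k R = s R) /\
                         (~ (ar R < k /\ N R) -> q k R = R).
  elim=> [|k IH] R /=; first by split => // [[]].
  have [IH1 IH2] := IH R.
  rewrite /p; split.
  - move=> [Hl HN]; rewrite ltnS leq_eqVlt in Hl.
    case/orP: Hl => [/eqP Ek|Hl].
    + rewrite IH2; last by rewrite Ek ltnn => -[].
      case: (excluded_middle_informative (ar R = k /\ N R)) => // c.
      by exfalso; apply: c.
    + rewrite IH1 //; destruct (excluded_middle_informative (ar (s R) = k /\ N (s R))) as [c|c] => //=; exfalso; case: c => E0 _.
      by move: Hl; rewrite -E0 As ltnn.
  - move=> H; rewrite IH2; last first.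
      move=> [H1 H2]; apply: H; split => //; exact: ltnW.
    case: (excluded_middle_informative (ar R = k /\ N R)) => [[E HN]|//]; exfalso; apply: H.
    by rewrite E ltnS leqnn.
have Pq : forall k g, T2 g -> T2 (rename (q k) g).
  elim=> [|k IH] g Hg /=; first by rewrite rename_id.
  rewrite -[rename _ g]/(rename (fun R => p k (q k R)) g) -rename_comp.
  exact/Pp/IH.
have Empty : forall R, ~ N R -> forall M (rho : nat -> dom M),
    (forall g, T2 g -> sat rho g) -> forall l, size l = ar R -> ~ @Defs.rel _ M R l.
  move=> R HN M rho HM l Hl Hr.
  have Sn : sentence ar (Neg (ex_rel ar R)).
    have [W Cl] := sentence_ex_rel _ ar R; split => //=; by rewrite Cl.
  case: (Cp2 _ (sentence_ex_rel _ ar R)) => H.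
    apply: HN; exact/(theory_entails _ _ _ _ Th2 (sentence_ex_rel _ ar R)).
  exact: (HM _ H (sat_ex_rel _ _ _ rho _ _ Hl Hr)).
have K : forall g, T2 g -> T2 (rename s g).
  move=> g Hg.
  have Sg := (proj1 Th2) g Hg.
  have [k Hk] := syms_ok_bound _ ar g.
  apply/(theory_entails _ _ _ _ Th2 (rename_sentence _ _ _ _ As Sg)) => M rho HM.
  apply/(sat_transfer _ _ M (q k) s g (Aq k) As (proj1 Sg)); last exact: HM _ (Pq k g Hg).
  apply: syms_ok_mono Hk => R Hl.
  case: (classic (N R)) => HN.
    by left; apply: (proj1 (Qspec k R)).
  right; rewrite (proj2 (Qspec k R)); last by case.
  move=> l Hlen; split; first exact: Empty HN M rho HM l Hlen.
  apply: (Empty (s R) (fun H => HN (proj1 (NS R) H)) M rho HM l); by rewrite As.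
move=> f; split => H.
- have /Es [g [Tg ->]] := H; exact: K.
- have Sf := (proj1 Th2) f H.
  case: (Cp1 f Sf) => // H'.
  have [g [Tg Eg]] := (proj2 (Es _) H').
  have TN : T2 (Neg f) by rewrite Eg; exact: K.
  exfalso; apply: C2; apply: (proj2 Th2); first by split.
  move=> M rho HM; exact: (HM _ TN (HM _ H)).
Qed.
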